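(* (a) The knot signature functions $\{\sigma_\omega\}_{\omega\in S}$ form a linearly independent set of real-valued functions on the set of all knots in $S^3$. (b) The averaged signature functions $\{\sigma^*_\omega\}_{\omega\in S}$ form a linearly independent set of homomorphisms $\mathcal{G}\to\mathbb{R}$ on the algebraic concordance group $\mathcal{G}$ (and hence also on the knot concordance group $\mathcal{C}$).
   Context: A Seifert matrix is a square integral matrix $V$ with $\det(V-V^T)=\pm1$; for a unit complex number $\omega$, $\sigma_\omega(V)$ is the signature of $(1-\omega)V+(1-\bar\omega)V^T$, and for a knot $K$, $\sigma_\omega(K)=\sigma_\omega(V_K)$ for any Seifert matrix $V_K$ of $K$. $S$ is the set of unit complex numbers with positive imaginary part. A Seifert matrix of size $2g$ is metabolic if the form $x^TVy$ vanishes on some rank-$g$ direct summand of $\mathbb{Z}^{2g}$. The algebraic concordance group $\mathcal{G}$ is the set of Seifert matrices modulo the relation $V_1\sim V_2$ iff $V_1\oplus(-V_2)$ is metabolic, with group operation induced by direct sum. The averaged signature is $\sigma^*_{e^{i\theta_0}}(V)=\frac12\big(\lim_{\theta\to\theta_0^+}\sigma_{e^{i\theta}}(V)+\lim_{\theta\to\theta_0^-}\sigma_{e^{i\theta}}(V)\big)$, which descends to a homomorphism on $\mathcal{G}$. The knot concordance group $\mathcal{C}$ maps onto $\mathcal{G}$ via $K\mapsto V_K$. *)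

(* Defs.v *)
From HB Require Import structures.
From mathcomp Require Import all_boot all_order all_algebra.
From mathcomp Require Import complex.
From mathcomp Require Import all_classical all_reals topology normedtype trigo.

Set Implicit Arguments.
Unset Strict Implicit.
Unset Printing Implicit Defensive.

Import Order.TTheory GRing.Theory Num.Theory.
Import numFieldNormedType.Exports.
Local Open Scope classical_set_scope.
Local Open Scope ring_scope.

Definition is_seifert (n : nat) (V : 'M[int]_n) : Prop :=
  \det (V - V^T) = 1 \/ \det (V - V^T) = -1.

Section Sig.
Variable R : realType.
Local Notation C := (R[i]).

(* The
   eigenvalues are the diagonal entries of the spectral (Schur) decomposition
   A = P^-1 diag(d) P provided by mathcomp's spectral.v. *)
Definition hsignature (n : nat) (A : 'M[C]_n) : int :=
  (#|[pred i : 'I_n | 0 < spectral_diag A 0 i]|%:Z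
   - #|[pred i : 'I_n | spectral_diag A 0 i < 0]|%:Z)%R.

Definition in_S (w : C) : Prop := `|w| = 1 /\ 0 < 'Im w.

Definition sigma_omega (w : C) (n : nat) (V : 'M[int]_n) : int :=
  hsignature ((1 - w) *: map_mx (fun z : int => z%:~R : C) V
              + (1 - w^*) *: map_mx (fun z : int => z%:~R : C) V^T).

Definition expi (t : R) : C := Complex (cos t) (sin t).

Definition sigma_theta (n : nat) (V : 'M[int]_n) (t : R) : R :=
  (sigma_omega (expi t) V)%:~R.

Definition avg_sigma (t0 : R) (n : nat) (V : 'M[int]_n) : R :=
  (lim (sigma_theta V @ t0^'+) + lim (sigma_theta V @ t0^'-)) / 2.

End Sig.

(* Main.v *)
Require Import Defs.
From HB Require Import structures.
From mathcomp Require Import all_boot all_order all_algebra.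
From mathcomp Require Import complex.
From mathcomp Require Import all_classical all_reals topology normedtype trigo.
From mathcomp Require Import zify ring lra.
Import Order.TTheory GRing.Theory Num.Theory.
Import numFieldNormedType.Exports.

Set Implicit Arguments.
Unset Strict Implicit.
Unset Printing Implicit Defensive.
Local Open Scope ring_scope.

Section Syl.
Variable C : numClosedFieldType.

Definition ct m n (M : 'M[C]_(m, n)) : 'M[C]_(n, m) := map_mx Num.conj (M^T).

Lemma ct_mul m n p (A : 'M[C]_(m, n)) (B : 'M[C]_(n, p)) :
  ct (A *m B) = ct B *m ct A.
Proof. by rewrite /ct trmx_mul map_mxM. Qed.

Lemma ctK m n (A : 'M[C]_(m, n)) : ct (ct A) = A.
Proof.
by apply/matrixP => i j; rewrite !mxE conjCK.
Qed.

Lemma ct_unit n (A : 'M[C]_n) : (ct A \in unitmx) = (A \in unitmx).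
Proof. by rewrite /ct map_unitmx unitmx_tr. Qed.

Definition posc n (d : 'rV[C]_n) := #|[pred i : 'I_n | 0 < d 0 i]|.
Definition negc n (d : 'rV[C]_n) := #|[pred i : 'I_n | d 0 i < 0]|.

Lemma qdiag n (z : 'rV[C]_n) (F : 'rV[C]_n) :
  (z *m diag_mx F *m ct z) 0 0 = \sum_j F 0 j * (z 0 j * (z 0 j)^*).
Proof.
rewrite mul_mx_diag !mxE; apply: eq_bigr => j _; rewrite !mxE.
by rewrite mulrCA mulrA.
Qed.

Lemma qcongr n (v : 'rV[C]_n) (N : 'M[C]_n) F :
  (v *m (ct N *m diag_mx F *m N) *m ct v) 0 0 =
  ((v *m ct N) *m diag_mx F *m ct (v *m ct N)) 0 0.
Proof. by rewrite ct_mul ctK !mulmxA. Qed.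

Lemma rank_diag_ub n (P : pred 'I_n) :
  (\rank (diag_mx (\row_i (P i)%:R : 'rV[C]_n)) <= #|P|)%N.
Proof.
rewrite diag_mx_sum_delta.
have -> : #|P| = (\sum_(i < n) (P i : nat))%N.
  rewrite -sum1_card big_mkcond /=; apply: eq_bigr => i _; by rewrite unfold_in; case: (P i).
pose K := (fun (x : 'M[C]_n) (y : nat) => is_true (\rank x <= y)%N).
have K0 : K 0 0%N by rewrite /K mxrank0.
have KD : forall x1 x2 y1 y2, K x1 x2 -> K y1 y2 -> K (x1 + y1) (x2 + y2)%N.
  move=> x1 x2 y1 y2 h1 h2; apply: leq_trans (mxrank_add _ _) _; exact: leq_add.
have KF : forall i : 'I_n, true -> K ((\row_i0 (P i0)%:R : 'rV[C]_n) 0 i *: delta_mx i i) (P i : nat).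
  move=> i _; rewrite /K mxE; case: (P i) => /=.
  + by rewrite scale1r mxrank_delta.
  + by rewrite scale0r mxrank0.
exact: (big_ind2 K K0 KD KF).
Qed.

Lemma rank_diag_lb n (P : pred 'I_n) :
  (#|P| <= \rank (diag_mx (\row_i (P i)%:R : 'rV[C]_n)))%N.
Proof.
have e : (1%:M : 'M[C]_n) = diag_mx (\row_i (P i)%:R) + diag_mx (\row_i ((predC P) i)%:R).
  apply/matrixP => i j; rewrite !mxE; case: (i =P j) => [->|] /=; last by rewrite !mulr0n addr0.
  rewrite !mulr1n /=; case: (P j) => /=; by rewrite ?addr0 ?add0r.
have := mxrank1 C n; rewrite e => h.
have := mxrank_add (diag_mx (\row_i (P i)%:R : 'rV[C]_n)) (diag_mx (\row_i ((predC P) i)%:R)).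
rewrite h => h2.
have h3 := rank_diag_ub (predC P).
have h4 : (#|P| + #|predC P|)%N = n.
  have := cardC P; rewrite [X in _ = X]card_ord => e1; apply: (etrans _ e1); congr (_ + _)%N; apply: eq_card => i; by rewrite !inE.
rewrite -(leq_add2r #|predC P|) h4; apply: leq_trans h2 _; by rewrite leq_add2l.
Qed.

Lemma rowV_neq0 n (z : 'rV[C]_n) : z != 0 -> exists j, z 0 j != 0.
Proof.
move=> nz; apply/existsP; apply: contraR nz => /existsPn h.
apply/eqP/matrixP => i j; rewrite ord1 mxE; exact/eqP/negPn/h.
Qed.

Lemma G n (N1 N2 : 'M[C]_n) (F1 F2 : 'rV[C]_n) :
  N1 \in unitmx -> N2 \in unitmx -> (forall j, F1 0 j \is Num.real) ->
  ct N1 *m diag_mx F1 *m N1 = ct N2 *m diag_mx F2 *m N2 ->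
  (posc F2 <= posc F1)%N.
Proof.
move=> u1 u2 r1 eA; rewrite leqNgt; apply/negP => Hlt.
set P2 := [pred i : 'I_n | 0 < F2 0 i].
set P1 := [pred i : 'I_n | ~~ (0 < F1 0 i)].
set D2 := diag_mx (\row_i (P2 i)%:R : 'rV[C]_n).
set D1 := diag_mx (\row_i (P1 i)%:R : 'rV[C]_n).
set K1 := invmx (ct N1); set K2 := invmx (ct N2).
have uK1 : K1 \in unitmx by rewrite unitmx_inv ct_unit.
have uK2 : K2 \in unitmx by rewrite unitmx_inv ct_unit.
have rX : (#|P2| <= \rank (D2 *m K2))%N.
  by rewrite mxrankMfree ?row_free_unit //; exact: rank_diag_lb.
have rY : (#|P1| <= \rank (D1 *m K1))%N.
  by rewrite mxrankMfree ?row_free_unit //; exact: rank_diag_lb.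
have cP1 : #|P1| = (n - posc F1)%N.
  have := cardC [pred i : 'I_n | 0 < F1 0 i]; rewrite [X in _ = X]card_ord => e1.
  rewrite /posc -[X in (X - _)%N]e1 addKn; apply: eq_card => i; by rewrite !inE.
have := mxrank_sum_cap (D2 *m K2) (D1 *m K1).
have := rank_leq_col (D2 *m K2 + D1 *m K1)%MS.
move=> hc hs.
have : \rank (D2 *m K2 :&: D1 *m K1)%MS != 0.
  rewrite /posc in Hlt cP1; rewrite -/P2 in Hlt.
  apply/eqP => h0; rewrite h0 in hs.
  have : (posc F1 <= n)%N by rewrite /posc; apply: leq_trans (max_card _) _; rewrite card_ord.
  rewrite /posc; lia.
rewrite mxrank_eq0 => /rowV0Pn [v]; rewrite sub_capmx => /andP [/submxP [a ea] /submxP [b eb]] vnz.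
pose q := (v *m (ct N1 *m diag_mx F1 *m N1) *m ct v) 0 0.
have q1 : q = \sum_j F1 0 j * ((b *m D1) 0 j * ((b *m D1) 0 j)^*).
  rewrite /q qcongr; have -> : v *m ct N1 = b *m D1 by rewrite eb mulmxA mulmxKV ?ct_unit.
  exact: qdiag.
have q2 : q = \sum_j F2 0 j * ((a *m D2) 0 j * ((a *m D2) 0 j)^*).
  rewrite /q eA qcongr; have -> : v *m ct N2 = a *m D2 by rewrite ea mulmxA mulmxKV ?ct_unit.
  exact: qdiag.
have zn : a *m D2 != 0.
  apply: contra vnz => /eqP h; by rewrite ea mulmxA h mul0mx.
have [j zj] := rowV_neq0 zn.
have hz : forall k, (a *m D2) 0 k = a 0 k * (P2 k)%:R.
  by move=> k; rewrite mul_mx_diag !mxE.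
have Pj : P2 j.
  move: zj; rewrite hz; by case: (P2 j) => //; rewrite mulr0 eqxx.
have qpos : 0 < q.
  rewrite q2 (bigD1 j) //=.
  apply: ltr_pwDl.
    apply: mulr_gt0; first exact: Pj.
    by rewrite mul_conjC_gt0.
  apply: sumr_ge0 => k _.
  rewrite hz; case Pk: (P2 k); last by rewrite !mulr0 mul0r mulr0.
  apply: mulr_ge0; first exact: ltW.
  exact: mul_conjC_ge0.
have qneg : q <= 0.
  rewrite q1; apply: sumr_le0 => k _.
  rewrite mul_mx_diag !mxE; case Pk: (P1 k).
    have : F1 0 k <= 0.
      move: Pk; rewrite inE; rewrite real_ltNge ?real0 ?r1 //.
      by rewrite negbK.
    move=> hle; apply: mulr_le0_ge0 => //.
    exact: mul_conjC_ge0.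
  by rewrite !mulr0 mul0r mulr0.
by move: (lt_le_trans qpos qneg); rewrite ltxx.
Qed.


Lemma ctdiag n (F : 'rV[C]_n) : (forall j, F 0 j \is Num.real) ->
  ct (diag_mx F) = diag_mx F.
Proof.
move=> rF; apply/matrixP => i j; rewrite !mxE.
case: (i =P j) => [->|ne]; first by rewrite eqxx !mulr1n conj_Creal.
have ne' : (j == i) = false by apply/eqP => h; apply: ne.
by rewrite ?ne' !mulr0n conjC0.
Qed.

Lemma notpos_neg (x : C) : x \is Num.real -> x != 0 -> (~~ (0 < x)) = (x < 0).
Proof.
move=> rx nz; rewrite real_ltNge ?real0 // negbK le_eqVlt.
by rewrite (negbTE nz).
Qed.

Lemma sylv n (A M : 'M[C]_n) (E : 'rV[C]_n) :
  M \in unitmx -> (forall j, E 0 j \is Num.real) -> (forall j, E 0 j != 0) ->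
  A = ct M *m diag_mx E *m M ->
  posc (spectral_diag A) = posc E /\ negc (spectral_diag A) = negc E.
Proof.
move=> uM rE nzE eA.
have hA : ct A = A by rewrite eA !ct_mul ctK ctdiag // mulmxA.
have herm : A \is hermsymmx.
  apply/is_hermitianmxP; rewrite expr0 scale1r; exact/esym/hA.
have rD : forall j, spectral_diag A 0 j \is Num.real.
  by move=> j; have /mxOverP := hermitian_spectral_diag_real herm; apply.
set D := spectral_diag A.
have eP : A = ct (spectralmx A) *m diag_mx D *m spectralmx A.
  have := orthomx_spectralP (hermitian_normalmx herm).
  by move=> /= e; rewrite {1}e invmx_unitary // spectral_unitarymx.
have uP := spectral_unit A.
have h1 : (posc E <= posc D)%N.
  apply: (G uP uM rD); by rewrite -eP.
have h2 : (posc (- E) <= posc (- D))%N.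
  apply: (G uP uM).
    by move=> j; rewrite mxE rpredN.
  by rewrite !raddfN /= !mulNmx -eP -eA.
have pN : forall F : 'rV[C]_n, posc (- F) = negc F.
  by move=> F; apply: eq_card => i; rewrite !inE mxE oppr_gt0.
rewrite !pN in h2.
have hD : (posc D + negc D <= n)%N.
  rewrite /posc /negc -cardUI.
  have -> : #|[predI [pred i : 'I_n | 0 < D 0 i] & [pred i : 'I_n | D 0 i < 0]]| = 0%N.
    apply: eq_card0 => i; rewrite !inE; apply/negP => /andP [a b].
    by move: (lt_trans a b); rewrite ltxx.
  by rewrite addn0 -[X in (_ <= X)%N](card_ord n) max_card.
have hE : (posc E + negc E = n)%N.
  have := cardC [pred i : 'I_n | 0 < E 0 i]; rewrite [X in _ = X]card_ord => e1.
  rewrite -[RHS]e1 /posc /negc; congr (_ + _)%N.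
  by apply: eq_card => i; rewrite !inE notpos_neg.
split; apply/eqP; rewrite eqn_leq; lia.
Qed.

End Syl.

Set Implicit Arguments.
Unset Strict Implicit.
Unset Printing Implicit Defensive.
Local Open Scope ring_scope.

Definition Vf (p h : int) (i j : nat) : int :=
  match i, j with
  | 0, 0 => p | 1, 1 => p | 0, 2 => 1 | 1, 3 => 1 | 2, 3 => 1 | 3, 2 => 1
  | 3, 3 => - (2 * h) | _, _ => 0 end.
Definition Vt (p h : int) : 'M[int]_4 := \matrix_(i < 4, j < 4) Vf p h i j.

Ltac ord4 i := case: i => [[|[|[|[|?]]]] ?] //.

Lemma VtJ p h : (Vt p h - (Vt p h)^T) *m (Vt p h - (Vt p h)^T) = (-1)%:M.
Proof.
apply/matrixP => i j; rewrite !mxE !big_ord_recl big_ord0 !mxE.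
ord4 i; ord4 j; rewrite /= ; ring.
Qed.

Lemma Vt_det p h : \det (Vt p h - (Vt p h)^T) = 1 \/ \det (Vt p h - (Vt p h)^T) = -1.
Proof.
have := congr1 determinant (VtJ p h); rewrite det_mulmx det_scalar.
rewrite -expr2 => /eqP; rewrite (_ : (-1) ^+ 4 = 1 :> int) //.
by rewrite sqrf_eq1 => /orP [] /eqP; [left|right].
Qed.

Section Cong.
Variable C : numClosedFieldType.
Variables (u ub : C) (p h : int).
Let P : C := p%:~R.
Let Hh : C := h%:~R.

Definition Mf (i j : nat) : C :=
  match i, j with
  | 0, 0 => 1 | 1, 1 => 1 | 2, 2 => 1 | 3, 3 => 1
  | 0, 2 => u / ((u + ub) * P) | 1, 3 => u / ((u + ub) * P)
  | 2, 3 => - (P * (u + ub)) | _, _ => 0 end.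
Definition Msf (i j : nat) : C :=
  match i, j with
  | 0, 0 => 1 | 1, 1 => 1 | 2, 2 => 1 | 3, 3 => 1
  | 2, 0 => ub / ((u + ub) * P) | 3, 1 => ub / ((u + ub) * P)
  | 3, 2 => - (P * (u + ub)) | _, _ => 0 end.
Definition Mm : 'M[C]_4 := \matrix_(i < 4, j < 4) Mf i j.
Definition Msm : 'M[C]_4 := \matrix_(i < 4, j < 4) Msf i j.
Definition Ef (j : nat) : C :=
  match j with
  | 0 => (u + ub) * P | 1 => (u + ub) * P | 2 => - P^-1
  | _ => P * (u + ub) ^+ 2 - 2 * Hh * (u + ub) - P^-1 end.
Definition Ev : 'rV[C]_4 := \row_(j < 4) Ef j.

Lemma cong_eq (hu : u != 1) (hub : ub = u / (u - 1)) (hu0 : u != 0) (hP : P != 0) :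
  \matrix_(i < 4, j < 4) (u * (Vf p h i j)%:~R + ub * (Vf p h j i)%:~R)
  = Msm *m diag_mx Ev *m Mm.
Proof.
apply/matrixP => i j; rewrite mul_mx_diag !mxE !big_ord_recl big_ord0 !mxE.
have i0 : ((0 : int)%:~R : C) = 0 by [].
have i1 : ((1 : int)%:~R : C) = 1 by [].
have i2 : ((2 : int)%:~R : C) = 2 by [].
have hu1 : u - 1 != 0 by rewrite subr_eq0.
ord4 i; ord4 j; rewrite /= ?intrN ?intrM ?i0 ?i1 ?i2 -/P -/Hh; rewrite ?hub; field.
all: rewrite ?hP ?hu1 //.
all: have -> : u * (u - 1) + u = u ^+ 2 by ring.
all: by rewrite sqrf_eq0.
Qed.

Lemma ct_Mm (hub : ub = u^*) : ct Mm = Msm.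
Proof.
have rP : P^* = P by rewrite conj_Creal // realz.
have cub : ub^* = u by rewrite hub conjCK.
apply/matrixP => i j; rewrite !mxE.
ord4 i; ord4 j; rewrite /= ?conjC0 ?conjC1 //;
  rewrite !(rmorphM, rmorphD, rmorphN, fmorphV) /= ?rP ?cub -?hub // ?[ub + u]addrC //.
Qed.

Lemma Mm_unit : Mm \in unitmx.
Proof.
rewrite unitmxE -det_tr det_trig.
  rewrite !big_ord_recl big_ord0 !mxE /= !mulr1; exact: unitr1.
apply/is_trig_mxP => i j; rewrite !mxE.
ord4 i; ord4 j.
Qed.

End Cong.

Lemma posc_sum (C : numClosedFieldType) n (d : 'rV[C]_n) :
  posc d = (\sum_(i < n) ((0 < d 0 i)%R : nat))%N.
Proof.
rewrite /posc -sum1_card big_mkcond /=; apply: eq_bigr => i _; by rewrite unfold_in; case: (0 < d 0 i).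
Qed.

Lemma negc_sum (C : numClosedFieldType) n (d : 'rV[C]_n) :
  negc d = (\sum_(i < n) ((d 0 i < 0)%R : nat))%N.
Proof.
rewrite /negc -sum1_card big_mkcond /=; apply: eq_bigr => i _; by rewrite unfold_in; case: (d 0 i < 0).
Qed.

Lemma sig_Vt (C : numClosedFieldType) (u ub : C) (p h : int) :
  ub = u^* -> u != 0 -> u * ub = u + ub -> (0 < p)%R ->
  let s := u + ub in let P := (p%:~R : C) in
  let E3 := P * s ^+ 2 - 2 * h%:~R * s - P^-1 in
  E3 != 0 ->
  let H := u *: map_mx (fun z : int => z%:~R : C) (Vt p h)
           + ub *: map_mx (fun z : int => z%:~R : C) (Vt p h)^T in
  (posc (spectral_diag H))%:Z - (negc (spectral_diag H))%:Z = if 0 < E3 then 2 else 0.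
Proof.
move=> hubc u0 uu p0 s P E3 E30 H.
have s0 : 0 < s by rewrite /s -uu hubc mul_conjC_gt0.
have hu1 : u != 1.
  apply/eqP => e; move: uu; rewrite e mul1r => /(congr1 (fun x => x - ub)).
  rewrite /= subrr addrK => h0; have := oner_neq0 C; by rewrite -h0 eqxx.
have hub : ub = u / (u - 1).
  have hu1' : u - 1 != 0 by rewrite subr_eq0.
  apply: (mulIf hu1'); rewrite mulfVK //.
  by rewrite mulrBr mulr1 mulrC uu addrK.
have P0 : 0 < P by rewrite ltr0z.
have eH : H = ct (Mm u ub p) *m diag_mx (Ev u ub p h) *m Mm u ub p.
  rewrite ct_Mm // -cong_eq //; last by rewrite gt_eqF.
  by apply/matrixP => i j; rewrite !mxE.
have rs : s \is Num.real by apply: gtr0_real.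
have rP : P \is Num.real by apply: realz.
have rE : forall j, Ev u ub p h 0 j \is Num.real.
  have rs' : u + ub \is Num.real by [].
  move=> j; rewrite mxE; ord4 j; rewrite /=;
  by rewrite ?(rpredB, rpredM, rpredN, rpredV, rpredX, realz, rs', rpred_nat).
have E0 : 0 < Ef u ub p h 0 by rewrite /= mulr_gt0.
have E2 : Ef u ub p h 2 < 0 by rewrite /= oppr_lt0 invr_gt0.
have nE : forall j, Ev u ub p h 0 j != 0.
  move=> j; rewrite mxE; ord4 j.
  - by rewrite gt_eqF.
  - by rewrite gt_eqF.
  - by rewrite lt_eqF.
have [hp hn] := sylv (Mm_unit u ub p) rE nE eH.
rewrite hp hn posc_sum negc_sum !big_ord_recl !big_ord0 !mxE /=.
move: E0 E2 => /= E0 E2.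
rewrite E0 (lt_gtF E0) E2 (lt_gtF E2).
have rE3 : E3 \is Num.real by have := rE 3%:R; rewrite mxE.
change (p%:~R * (u + ub) ^+ 2 - 2 * h%:~R * (u + ub) - p%:~R^-1) with E3.
have : (E3 < 0) || (0 < E3) by rewrite -real_neqr_lt ?real0.
case/orP => h3; first by rewrite h3 (lt_gtF h3).
by rewrite h3 (lt_gtF h3).
Qed.

Set Implicit Arguments.
Unset Strict Implicit.
Unset Printing Implicit Defensive.
Local Open Scope ring_scope.

Definition fR (R : realType) (p h : int) (s : R) : R :=
  p%:~R * s ^+ 2 - 2 * h%:~R * s - (p%:~R)^-1.

Lemma dens (R : realType) (s1 s2 : R) : 0 < s1 -> s1 < s2 ->
  exists p h : int, (0 < p)%R /\ exists rho : R, s1 < rho < s2 /\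
   (forall s, 0 < s -> s < rho -> fR p h s < 0) /\
   (forall s, rho < s -> 0 < fR p h s).
Proof.
move=> s10 s12.
have s20 : 0 < s2 by apply: lt_trans s12.
set d := s1^-1 - s2^-1.
have d0 : 0 < d by rewrite /d subr_gt0 ltf_pV2 // ?posrE.
set c := (2 * d)^-1.
set h := Num.floor c + 1.
have hc : c < h%:~R by rewrite /h floorD1_gt.
have c0 : 0 < c by rewrite /c invr_gt0 mulr_gt0.
have h0 : 0 < (h%:~R : R) by apply: lt_trans hc.
set hR := (h%:~R : R).
set q := Num.sqrt (hR ^+ 2 + 1).
have q2 : q ^+ 2 = hR ^+ 2 + 1 by rewrite sqr_sqrtr // addr_ge0 // sqr_ge0.
have q0 : 0 <= q by apply: sqrtr_ge0.
have qh : hR < q.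
  rewrite -[hR in hR < _]ger0_norm ?ltW // -sqrtr_sqr /q ltr_sqrt ?ltrDl //.
  by rewrite ltr_pwDr // sqr_ge0.
set g := hR + q.
have g2h : 2 * hR < g by rewrite /g mulr2n mulrDl mul1r ltrD2l.
have g0 : 0 < g by apply: le_lt_trans g2h; rewrite mulr_ge0 // ltW.
set p := Num.floor (g / s2) + 1.
have p1 : g / s2 < p%:~R by rewrite /p floorD1_gt.
have p2 : (p%:~R : R) <= g / s2 + 1.
  rewrite /p intrD lerD2r; exact: (proj1 (andP (floor_itv _))).
have gd : 1 < g * d.
  have : 1 < 2 * hR * d.
    have e : 1 = 2 * d * c by rewrite /c mulfV // gt_eqF // mulr_gt0.
    by rewrite [2 * hR * d]mulrAC {1}e ltr_pM2l ?mulr_gt0.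
  move=> h1; apply: lt_trans h1 _; by rewrite ltr_pM2r.
have pg : (p%:~R : R) < g / s1.
  have e2 : g * d = g / s1 - g / s2 by rewrite /d mulrBr.
  move: gd p2; rewrite e2; lra.
have P0 : 0 < (p%:~R : R) by apply: lt_trans p1; rewrite divr_gt0.
exists p, h; split; first by rewrite -(ltr0z R).
exists (g / p%:~R); split.
  apply/andP; split.
    by rewrite ltr_pdivlMr // mulrC -ltr_pdivlMr.
  by rewrite ltr_pdivrMr // mulrC -ltr_pdivrMr.
have key : forall s, fR p h s * p%:~R = (p%:~R * s - g) * (p%:~R * s - (hR - q)).
  move=> s; rewrite /fR /g; rewrite -/hR.
  have pnz : (p%:~R : R) != 0 by rewrite gt_eqF.
  rewrite mulrBl mulVf //.
  have -> : (p%:~R * s - (hR + q)) * (p%:~R * s - (hR - q)) =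
     (p%:~R * s) ^+ 2 - 2 * hR * (p%:~R * s) + (hR ^+ 2 - q ^+ 2) by ring.
  rewrite q2; ring.
have hq : hR - q < 0 by rewrite subr_lt0.
split.
  move=> s s0 sr.
  have a1 : p%:~R * s - g < 0.
    by rewrite subr_lt0 mulrC -ltr_pdivlMr.
  have a2 : 0 < p%:~R * s - (hR - q).
    rewrite subr_gt0; apply: lt_trans hq _; by rewrite mulr_gt0.
  have : fR p h s * p%:~R < 0 by rewrite key (nmulr_rlt0 _ a1).
  by rewrite pmulr_llt0.
move=> s sr.
have a1 : 0 < p%:~R * s - g.
  by rewrite subr_gt0 mulrC -ltr_pdivrMr.
have a2 : 0 < p%:~R * s - (hR - q).
  rewrite subr_gt0; apply: lt_trans hq _; rewrite mulr_gt0 //.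
  apply: lt_trans sr; by rewrite divr_gt0.
have : 0 < fR p h s * p%:~R by rewrite key mulr_gt0.
by rewrite pmulr_lgt0.
Qed.

Lemma seq_max (R : realType) (T : eqType) (l : seq T) (f : T -> R) :
  l != [::] -> exists2 x, x \in l & forall y, y \in l -> f y <= f x.
Proof.
elim: l => [//|a l IH] _.
case: (eqVneq l [::]) => [->|ln].
  by exists a; rewrite ?mem_head // => y; rewrite inE => /eqP ->.
have [x xl hx] := IH ln.
case: (leP (f a) (f x)) => ha.
  exists x; first by rewrite inE xl orbT.
  by move=> y; rewrite inE => /orP [/eqP ->|/hx].
exists a; first by rewrite mem_head.
move=> y; rewrite inE => /orP [/eqP ->//|/hx hy]; apply: le_trans hy (ltW ha).
Qed.

Lemma seq_below (R : realType) (l : seq R) (b : R) : 0 < b ->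
  (forall y, y \in l -> y < b) -> exists s1, 0 < s1 /\ s1 < b /\ forall y, y \in l -> y <= s1.
Proof.
move=> b0; elim: l => [|a l IH] hl.
  exists (b / 2); split; first by rewrite divr_gt0.
  by split => //; rewrite ltr_pdivrMr // ltr_pMr // ltr1n.
have [s1 [s10 [s1b hs1]]] := IH (fun y yl => hl y (@mem_behead _ (a :: l) y yl)).
have ab : a < b by apply: hl; rewrite mem_head.
exists (Num.max s1 a); split; first by rewrite lt_max s10.
split; first by rewrite gt_max s1b ab.
move=> y; rewrite inE => /orP [/eqP ->|/hs1 hy]; first by rewrite le_max lexx orbT.
by rewrite le_max hy.
Qed.

Lemma abstract_indep (R : realType) (T : eqType) (l : seq T) (c : T -> R) (sv : T -> R)
  (g : T -> forall n, 'M[int]_n -> R) (Pv : forall n, 'M[int]_n -> Prop) :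
  uniq l -> {in l &, injective sv} -> (forall x, x \in l -> 0 < sv x) ->
  (forall s1 s2, 0 < s1 -> s1 < s2 -> exists n (V : 'M[int]_n), Pv n V /\
     forall x, x \in l -> (sv x <= s1 -> g x n V = 0) /\ (s2 <= sv x -> g x n V = 2)) ->
  (forall n (V : 'M[int]_n), Pv n V -> \sum_(x <- l) c x * g x n V = 0) ->
  forall x, x \in l -> c x = 0.
Proof.
move=> ul inj pos test hsum x0 x0l; apply/eqP/negPn/negP => cx0.
set L0 := [seq x <- l | c x != 0].
have L0n : L0 != [::].
  apply/eqP => e; have : x0 \in L0 by rewrite mem_filter cx0.
  by rewrite e.
have [xm xmL hm] := seq_max sv L0n.
move: xmL; rewrite mem_filter => /andP [cxm xml].
have b0 := pos _ xml.
have hlt : forall z, z \in [seq sv y | y <- L0 & y != xm] -> z < sv xm.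
  move=> z /mapP [y yin ->]; move: yin; rewrite mem_filter => /andP [yxm]; rewrite mem_filter => /andP [cy yl].
  have : sv y <= sv xm by apply: hm; rewrite mem_filter cy yl.
  rewrite le_eqVlt => /orP [/eqP e|//].
  by move: yxm; rewrite (inj _ _ yl xml e) eqxx.
have [s1 [s10 [s1b hs1]]] := seq_below b0 hlt.
have [n [V [PV hV]]] := test s1 (sv xm) s10 s1b.
have := hsum n V PV.
rewrite (bigD1_seq xm) //= big1_seq.
  rewrite addr0 (proj2 (hV xm xml)) //.
  move=> /eqP; rewrite mulf_eq0 (negbTE cxm) /= pnatr_eq0 //.
move=> y /andP [yxm yl].
case: (eqVneq (c y) 0) => [->|cy]; first by rewrite mul0r.
rewrite (proj1 (hV y yl)) ?mulr0 //.
apply: hs1; apply/mapP; exists y => //.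
by rewrite mem_filter yxm mem_filter cy yl.
Qed.

Set Implicit Arguments.
Unset Strict Implicit.
Unset Printing Implicit Defensive.
Local Open Scope classical_set_scope.
Local Open Scope ring_scope.

Local Notation toC x := (real_complex _ x).

Definition svc (R : realType) (w : R[i]) : R := 2 - 2 * complex.Re w.

Lemma sv_eq (R : realType) (w : R[i]) : toC (svc w) = (1 - w) + (1 - w^*).
Proof.
case: w => a b; apply/eqP; rewrite eq_complex /=; apply/andP; split; apply/eqP.
  rewrite /svc /=; ring.
ring.
Qed.

Lemma toC_lt0 (R : realType) (x : R) : (0 < toC x) = (0 < x).
Proof. exact: (ltcR 0 x). Qed.

Lemma toC_eq0 (R : realType) (x : R) : (toC x == 0) = (x == 0).
Proof. by apply/eqP/eqP => [[]|->]. Qed.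

Lemma sigma_val (R : realType) (w : R[i]) (p h : int) :
  w * w^* = 1 -> w != 1 -> (0 < p)%R -> fR p h (svc w) != 0 ->
  ((sigma_omega w (Vt p h))%:~R : R) = if 0 < fR p h (svc w) then 2 else 0.
Proof.
move=> ww w1 p0 f0.
have hub : 1 - w^* = (1 - w)^* by rewrite rmorphB rmorph1.
have u0 : 1 - w != 0 by rewrite subr_eq0 eq_sym.
have uu : (1 - w) * (1 - w^*) = (1 - w) + (1 - w^*).
  have -> : (1 - w) * (1 - w^*) = 1 - w - w^* + w * w^* by ring.
  rewrite ww; ring.
have eE : (p%:~R : R[i]) * ((1 - w) + (1 - w^*)) ^+ 2 - 2 * h%:~R * ((1 - w) + (1 - w^*)) - (p%:~R)^-1
   = toC (fR p h (svc w)).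
  rewrite /fR -sv_eq !(rmorphB, rmorphM, rmorphXn, fmorphV, rmorph_int, rmorph_nat) //.
have E0 : (p%:~R : R[i]) * ((1 - w) + (1 - w^*)) ^+ 2 - 2 * h%:~R * ((1 - w) + (1 - w^*)) - (p%:~R)^-1 != 0.
  by rewrite eE toC_eq0.
have := sig_Vt hub u0 uu p0 E0.
rewrite /sigma_omega /hsignature eE toC_lt0 /posc /negc => ->.
by case: (0 < fR p h (svc w)).
Qed.

Lemma inS_comp (R : realType) (a b : R) : in_S (a +i* b)%C -> a ^+ 2 + b ^+ 2 = 1 /\ 0 < b.
Proof.
case => n1 i0; split.
  move: n1; rewrite normc_def /= => -[] e.
  by rewrite -[LHS]sqr_sqrtr ?e ?expr1n // addr_ge0 // sqr_ge0.
by move: i0; rewrite -complexIm /= toC_lt0.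
Qed.

Lemma inS_facts (R : realType) (w : R[i]) : in_S w ->
  w * w^* = 1 /\ w != 1 /\ 0 < svc w.
Proof.
case: w => a b hS; have [e b0] := inS_comp hS.
split.
  apply/eqP; rewrite eq_complex /=; apply/andP; split; apply/eqP.
    by rewrite -e; ring.
  ring.
split.
  apply/eqP => -[_ eb]; move: b0; by rewrite eb ltxx.
rewrite /svc /=; nra.
Qed.

Lemma inS_inj (R : realType) (w1 w2 : R[i]) : in_S w1 -> in_S w2 -> svc w1 = svc w2 -> w1 = w2.
Proof.
case: w1 => a1 b1; case: w2 => a2 b2 h1 h2.
have [e1 p1] := inS_comp h1; have [e2 p2] := inS_comp h2.
rewrite /svc /= => ea.
have ea' : a1 = a2 by lra.
have : (b1 - b2) * (b1 + b2) = 0.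
  have -> : (b1 - b2) * (b1 + b2) = (a2 ^+ 2 + b1 ^+ 2) - (a2 ^+ 2 + b2 ^+ 2) by ring.
  by rewrite -{1}ea' e1 e2 subrr.
move/eqP; rewrite mulf_eq0 => /orP [|]; last first.
  by move=> /eqP h; move: (addr_gt0 p1 p2); rewrite h ltxx.
by rewrite subr_eq0 => /eqP ->; rewrite ea'.
Qed.

Lemma part_a (R : realType) (s : seq R[i]) (c : R[i] -> R) :
      uniq s -> (forall w, w \in s -> in_S w) ->
      (forall (n : nat) (V : 'M[int]_n), is_seifert V ->
         \sum_(w <- s) c w * (sigma_omega w V)%:~R = 0) ->
      forall w, w \in s -> c w = 0.
Proof.
move=> us hS hsum.
apply: (@abstract_indep R _ s c (@svc R) (fun w n V => (sigma_omega w V)%:~R) (fun n V => is_seifert V) us).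
- by move=> x y xs ys; apply: inS_inj; apply: hS.
- by move=> x xs; have [_ [_]] := inS_facts (hS x xs).
- move=> s1 s2 s10 s12.
  have [p [h [p0 [rho [/andP [r1 r2] [fneg fpos]]]]]] := dens s10 s12.
  exists 4%N, (Vt p h); split; first exact: Vt_det.
  move=> x xs; have [ww [w1 sp]] := inS_facts (hS x xs); split => hx.
    have fl : fR p h (svc x) < 0 by apply: fneg => //; apply: le_lt_trans hx r1.
    have fn : fR p h (svc x) != 0 by rewrite lt_eqF.
    by rewrite sigma_val // (lt_gtF fl).
  have fl : 0 < fR p h (svc x) by apply: fpos; apply: lt_le_trans r2 hx.
  have fn : fR p h (svc x) != 0 by rewrite gt_eqF.
  by rewrite sigma_val // fl.
- exact: hsum.
Qed.

Lemma expi_facts (R : realType) (t : R) :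
  expi t * (expi t)^* = 1 /\ svc (expi t) = 2 - 2 * cos t.
Proof.
split => //; apply/eqP; rewrite eq_complex /=; apply/andP; split; apply/eqP.
  by rewrite -(cos2Dsin2 t); ring.
ring.
Qed.

Lemma expi_neq1 (R : realType) (t : R) : 0 < 2 - 2 * cos t -> expi t != 1.
Proof.
move=> h; apply/eqP => -[e _]; move: h; rewrite e; lra.
Qed.

Lemma avg_const (R : realType) (t : R) n (V : 'M[int]_n) (k : R) :
  (\forall x \near t, sigma_theta V x = k) -> avg_sigma t V = k.
Proof.
move=> H; rewrite /avg_sigma (@lim_near_cst _ _ _ _ _ k) ?(@lim_near_cst _ _ _ _ _ k).
- by field.
- exact: Rhausdorff.
- rewrite /at_left /within; apply: filterS H => x hx _; exact: hx.
- exact: Rhausdorff.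
- rewrite /at_right /within; apply: filterS H => x hx _; exact: hx.
Qed.

Lemma cont_sv (R : realType) (t : R) : (fun x => 2 - 2 * cos x) @ t --> 2 - 2 * cos t.
Proof.
apply: cvgB; first exact: cvg_cst.
apply: cvgM; first exact: cvg_cst.
exact: continuous_cos.
Qed.

Lemma near_sig (R : realType) (t : R) (p h : int) (rho : R) : (0 < p)%R ->
  (forall s, 0 < s -> s < rho -> fR p h s < 0) -> (forall s, rho < s -> 0 < fR p h s) ->
  0 < 2 - 2 * cos t ->
  (2 - 2 * cos t < rho -> avg_sigma t (Vt p h) = 0) /\
  (rho < 2 - 2 * cos t -> avg_sigma t (Vt p h) = 2).
Proof.
move=> p0 fneg fpos st; split => hr; apply: avg_const.
- have n1 := cvgr_lt _ (@cont_sv _ t) _ hr.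
  have n2 := cvgr_gt _ (@cont_sv _ t) _ st.
  near=> x.
  have a : 2 - 2 * cos x < rho by near: x; exact: n1.
  have b : 0 < 2 - 2 * cos x by near: x; exact: n2.
  have [ww sv] := expi_facts x.
  have fl : fR p h (svc (expi x)) < 0 by rewrite sv; apply: fneg.
  rewrite /sigma_theta sigma_val ?sv //; last by rewrite -sv lt_eqF.
    by rewrite -sv (lt_gtF fl).
  exact: expi_neq1.
- have n1 := cvgr_gt _ (@cont_sv _ t) _ hr.
  have n2 := cvgr_gt _ (@cont_sv _ t) _ st.
  near=> x.
  have a : rho < 2 - 2 * cos x by near: x; exact: n1.
  have b : 0 < 2 - 2 * cos x by near: x; exact: n2.
  have [ww sv] := expi_facts x.
  have fl : 0 < fR p h (svc (expi x)) by rewrite sv; apply: fpos.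
  rewrite /sigma_theta sigma_val ?sv //; last by rewrite -sv gt_eqF.
    by rewrite -sv fl.
  exact: expi_neq1.
Unshelve. all: by end_near.
Qed.

Lemma cos_lt1 (R : realType) (t : R) : 0 < t < pi -> 0 < 2 - 2 * cos t.
Proof.
move=> /andP [t0 tp].
have i0 : (0:R) \in `[0, pi] by rewrite in_itv /= lexx pi_ge0.
have it : t \in `[0, pi] by rewrite in_itv /= !ltW.
have : cos t < cos 0 by rewrite (ltr_cos i0 it).
rewrite cos0; lra.
Qed.

Lemma part_b (R : realType) (s : seq R) (c : R -> R) :
      uniq s -> (forall t, t \in s -> 0 < t < pi) ->
      (forall (n : nat) (V : 'M[int]_n), is_seifert V ->
         \sum_(t <- s) c t * avg_sigma t V = 0) ->
      forall t, t \in s -> c t = 0.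
Proof.
move=> us hs hsum.
apply: (@abstract_indep R _ s c (fun t => 2 - 2 * cos t) (fun t n V => avg_sigma t V)
   (fun n V => is_seifert V) us).
- move=> x y xs ys e.
  have /andP [x0 xp] := hs x xs; have /andP [y0 yp] := hs y ys.
  apply: cos_inj; rewrite ?in_itv /= ?ltW //; lra.
- by move=> x xs; apply: cos_lt1; apply: hs.
- move=> s1 s2 s10 s12.
  have [p [h [p0 [rho [/andP [r1 r2] [fneg fpos]]]]]] := dens s10 s12.
  exists 4%N, (Vt p h); split; first exact: Vt_det.
  move=> x xs; have st := cos_lt1 (hs x xs).
  have [N P] := near_sig p0 fneg fpos st.
  split => hx.
    by apply: N; apply: le_lt_trans hx r1.
  by apply: P; apply: lt_le_trans r2 hx.
- exact: hsum.
Qed.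

Theorem mainTheorem4 (R : realType) :
  (forall (s : seq R[i]) (c : R[i] -> R),
      uniq s -> (forall w, w \in s -> in_S w) ->
      (forall (n : nat) (V : 'M[int]_n), is_seifert V ->
         \sum_(w <- s) c w * (sigma_omega w V)%:~R = 0) ->
      forall w, w \in s -> c w = 0) /\
  (forall (s : seq R) (c : R -> R),
      uniq s -> (forall t, t \in s -> 0 < t < pi) ->
      (forall (n : nat) (V : 'M[int]_n), is_seifert V ->
         \sum_(t <- s) c t * avg_sigma t V = 0) ->
      forall t, t \in s -> c t = 0).
Proof.
split; [exact: part_a | exact: part_b].
Qed.
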